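(* Suppose that the local ring $(R,\mathfrak m)$ of prime characteristic $p$ is $F$-pure and $F$-finite. Then every $\Phi(E)$-special ideal of $R$ is fully $\Phi(E)$-special.
   Context: $(R,\mathfrak m)$ is a commutative Noetherian local ring of prime characteristic $p$, with Frobenius homomorphism $f(r)=r^p$. $R^{(1)}$ denotes $R$ as a left $R$-module in the usual way and as a right $R$-module via $f$. $R$ is $F$-finite if $R^{(1)}$ is a finitely generated left $R$-module; $R$ is $F$-pure if for every $R$-module $M$ the natural map $M\to R^{(1)}\otimes_R M$, $m\mapsto1\otimes m$, is injective. The Frobenius skew polynomial ring $R[x,f]$ consists of polynomials $\sum_{i=0}^n r_ix^i$, free as a left $R$-module on $(x^i)_{i\ge0}$, with $xr=r^px$; it is graded with $n$th component $Rx^n$. Let $E=E_R(R/\mathfrak m)$, and $\Phi(E)=R[x,f]\otimes_R E=\bigoplus_{n\ge0}Rx^n\otimes_RE$, graded left $R[x,f]$-module with $0$th component identified with $E$. An ideal $\mathfrak a$ is $\Phi(E)$-special if $\mathfrak a=(0:_RN)$ for some $R[x,f]$-submodule $N$ of $\Phi(E)$. $\operatorname{ann}_{\Phi(E)}(\mathfrak aR[x,f])$ is the submodule of elements of $\Phi(E)$ annihilated by all $rx^n$ with $r\in\mathfrak a$, $n\ge0$; $(\cdot)_0$ is its $0$th component. When $R$ is $F$-pure, $\mathfrak a$ is fully $\Phi(E)$-special if $(0:_E\mathfrak a)\subseteq(\operatorname{ann}_{\Phi(E)}(\mathfrak aR[x,f]))_0$. *)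

(* Defs.v *)
From HB Require Import structures.
From mathcomp Require Import all_boot all_order all_algebra.
Set Implicit Arguments. Unset Strict Implicit. Unset Printing Implicit Defensive.
Import Order.TTheory GRing.Theory.
Local Open Scope ring_scope.

Section CommAlg.
Variable R : comNzRingType.

Definition is_ideal (I : R -> Prop) : Prop :=
  [/\ I 0, (forall x y, I x -> I y -> I (x + y)) & (forall r x, I x -> I (r * x))].

Definition is_maximal_ideal (I : R -> Prop) : Prop :=
  [/\ is_ideal I, ~ I 1 &
      forall J : R -> Prop, is_ideal J -> (forall x, I x -> J x) -> ~ J 1 ->
        forall x, J x -> I x].

Definition is_local_with (m : R -> Prop) : Prop :=
  is_maximal_ideal m /\
  forall M : R -> Prop, is_maximal_ideal M -> forall x, M x <-> m x.

Definition finitely_generated_ideal (I : R -> Prop) : Prop :=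
  exists (n : nat) (g : 'I_n -> R),
    forall x, I x <-> exists c : 'I_n -> R, x = \sum_(i < n) c i * g i.

Definition noetherian : Prop :=
  forall I : R -> Prop, is_ideal I -> finitely_generated_ideal I.

Definition rlinear (M N : lmodType R) (f : M -> N) : Prop :=
  forall (r : R) (u v : M), f (r *: u + v) = r *: f u + f v.

Definition injective_module (E : lmodType R) : Prop :=
  forall (M N : lmodType R) (i : N -> M) (g : N -> E),
    rlinear i -> injective i -> rlinear g ->
    exists h : M -> E, rlinear h /\ forall v, h (i v) = g v.

(* E is an injective hull E_R(R/m): E is injective and an essential extension
   of a submodule R e0 isomorphic to R/m. *)
Definition injective_hull_residue (m : R -> Prop) (E : lmodType R) : Prop :=
  injective_module E /\
  exists e0 : E,
    (forall r : R, r *: e0 = 0 <-> m r) /\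
    (forall e : E, e <> 0 -> exists r : R, r *: e <> 0 /\ exists s : R, r *: e = s *: e0).

(* Balanced maps R x M -> W where R acts on the right of R through s |-> s^q
   (q = p^n), i.e. the right structure of R x^n. *)
Definition balanced (q : nat) (M : lmodType R) (W : zmodType) (phi : R -> M -> W) : Prop :=
  [/\ (forall r1 r2 v, phi (r1 + r2) v = phi r1 v + phi r2 v),
      (forall r v1 v2, phi r (v1 + v2) = phi r v1 + phi r v2) &
      (forall r s v, phi (r * s ^+ q) v = phi r (s *: v))].

(* The formal sum  \sum_i r_i (x) v_i  is zero in  R^{(q)} (x)_R M
   (tensor product defined by its universal property for balanced maps). *)
Definition tensor_zero (q : nat) (M : lmodType R) (t : seq (R * M)) : Prop :=
  forall (W : zmodType) (phi : R -> M -> W), balanced q phi ->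
    \sum_(u <- t) phi u.1 u.2 = 0.

Definition tensor_eq (q : nat) (M : lmodType R) (t1 t2 : seq (R * M)) : Prop :=
  tensor_zero q (t1 ++ [seq (- u.1, u.2) | u <- t2]).

Definition F_finite (p : nat) : Prop :=
  exists (n : nat) (g : 'I_n -> R),
    forall x : R, exists c : 'I_n -> R, x = \sum_(i < n) g i * c i ^+ p.

(* M -> R^{(1)} (x)_R M, v |-> 1 (x) v, injective for every R-module M *)
Definition F_pure (p : nat) : Prop :=
  forall (M : lmodType R) (v w : M), tensor_eq p [:: (1, v)] [:: (1, w)] -> v = w.

Variables (p : nat) (E : lmodType R).

(* Elements of Phi(E) = \bigoplus_n R x^n (x)_R E, represented by formal sums
   \sum_i r_i x^{n_i} (x) e_i, encoded as seq (n_i, (r_i, e_i)). *)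
Definition phiE := seq (nat * (R * E)).

Definition phi_comp (n : nat) (t : phiE) : seq (R * E) :=
  [seq u.2 | u <- t & u.1 == n].

Definition phi_zero (t : phiE) : Prop :=
  forall n, tensor_zero (p ^ n) (phi_comp n t).

Definition phi_opp (t : phiE) : phiE := [seq (u.1, (- u.2.1, u.2.2)) | u <- t].

Definition phi_eq (t1 t2 : phiE) : Prop := phi_zero (t1 ++ phi_opp t2).

(* left action of r x^k in R[x,f]:  r x^k . (s x^m (x) e) = r s^{p^k} x^{k+m} (x) e *)
Definition phi_act (r : R) (k : nat) (t : phiE) : phiE :=
  [seq (k + u.1, (r * u.2.1 ^+ (p ^ k), u.2.2)) | u <- t].

(* R[x,f]-submodules of Phi(E), as predicates on representatives that are
   invariant under equality in Phi(E). *)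
Definition is_Rxf_submodule (N : phiE -> Prop) : Prop :=
  [/\ (forall t1 t2, N t1 -> phi_eq t1 t2 -> N t2),
      N [::],
      (forall t1 t2, N t1 -> N t2 -> N (t1 ++ t2)) &
      (forall r k t, N t -> N (phi_act r k t))].

Definition annR (N : phiE -> Prop) (r : R) : Prop :=
  forall t, N t -> phi_zero (phi_act r 0 t).

Definition PhiE_special (a : R -> Prop) : Prop :=
  exists N : phiE -> Prop, is_Rxf_submodule N /\ forall r, a r <-> annR N r.

Definition ann_Phi (a : R -> Prop) (t : phiE) : Prop :=
  forall (r : R) (n : nat), a r -> phi_zero (phi_act r n t).

(* (0 :_E a) is contained in the 0th component of ann_{Phi(E)}(a R[x,f]),
   E being identified with R x^0 (x) E via e |-> 1 (x) e. *)
Definition fully_PhiE_special (a : R -> Prop) : Prop :=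
  forall e : E, (forall r, a r -> r *: e = 0) -> ann_Phi a [:: (0%N, (1, e))].

End CommAlg.

(* Main.v *)
Require Import Defs.
From HB Require Import structures.
From mathcomp Require Import all_boot all_order all_algebra.
From mathcomp Require Import boolp.
Import GRing.Theory.
Set Implicit Arguments. Unset Strict Implicit. Unset Printing Implicit Defensive.
Local Open Scope ring_scope.
Lemma fchoice (T : Type) (x0 : T) (P : nat -> T -> Prop) (m : nat) :
  (forall i, (i < m)%N -> exists x, P i x) ->
  exists f : nat -> T, forall i, (i < m)%N -> P i (f i).
Proof.
elim: m => [|m IH] H; first by exists (fun _ => x0).
have [f hf] : exists f : nat -> T, forall i, (i < m)%N -> P i (f i).
  by apply: IH => i hi; apply: H; exact: ltnW.
have [y hy] := H m (ltnSn m).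
exists (fun i => if i == m then y else f i) => i; rewrite ltnS leq_eqVlt.
by case: eqP => [->|_] //= /hf.
Qed.

Definition extf (R : Type) (x0 : R) (m : nat) (f : 'I_m -> R) (k : nat) : R :=
  odflt x0 (omap f (insub k)).

Lemma extfE (R : Type) (x0 : R) m (f : 'I_m -> R) (i : 'I_m) : extf x0 f i = f i.
Proof. by rewrite /extf valK. Qed.

Section Noeth.
Variables (R : comNzRingType) (hnoeth : noetherian R).

Definition vclosed (S : (nat -> R) -> Prop) :=
  [/\ S (fun _ => 0), (forall c d, S c -> S d -> S (fun i => c i + d i)) &
      (forall r c, S c -> S (fun i => r * c i))].

Lemma vclosed_sum (S : (nat -> R) -> Prop) (hS : vclosed S) N (a : nat -> R)
  (v : nat -> nat -> R) : (forall i, (i < N)%N -> S (v i)) ->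
  S (fun k => \sum_(i < N) a i * v i k).
Proof.
case: hS => S0 SD SZ.
elim: N => [|N IH] hv.
  by rewrite (_ : (fun k => _) = fun _ => 0) //; apply: funext => k; rewrite big_ord0.
rewrite (_ : (fun k => _) = fun k => \sum_(i < N) a i * v i k + a N * v N k).
  by apply: SD; [apply: IH => i hi; apply: hv; exact: ltnW | apply: SZ; apply: hv].
by apply: funext => k; rewrite big_ord_recr.
Qed.

Lemma noeth_vec m (S : (nat -> R) -> Prop) : vclosed S ->
  exists l (ks : nat -> nat -> R), (forall j, (j < l)%N -> S (ks j)) /\
    forall c, S c -> exists t : nat -> R,
      forall i, (i < m)%N -> c i = \sum_(j < l) t j * ks j i.
Proof.
elim: m S => [|m IH] S hS.
  by exists 0%N, (fun _ _ => 0); split => // c _; exists (fun _ => 0).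
have hS' := hS; case: hS' => S0 SD SZ.
pose I x := exists c, S c /\ c m = x.
have hI : is_ideal I.
  split.
  - by exists (fun _ => 0).
  - move=> x y [c [Sc <-]] [d [Sd <-]]; exists (fun i => c i + d i); split => //.
    exact: SD.
  - by move=> r x [c [Sc <-]]; exists (fun i => r * c i); split => //; exact: SZ.
have [n0 [g hg]] := hnoeth hI.
have Ig : forall i : 'I_n0, I (g i).
  move=> i; apply/hg; exists (fun k => (k == i)%:R).
  rewrite (bigD1 i) //= eqxx mul1r big1 ?addr0 // => k /negbTE ->; by rewrite mul0r.
have hcsex : forall i, (i < n0)%N -> exists c, S c /\ c m = extf 0 g i.
  move=> i hi; have [c hc] := Ig (Ordinal hi); exists c.
  by rewrite -[i]/(nat_of_ord (Ordinal hi)) extfE.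
have [cs hcs] := @fchoice (nat -> R) (fun _ => 0)
  (fun i c => S c /\ c m = extf 0 g i) n0 hcsex.
pose S' c := S c /\ c m = 0.
have hS' : vclosed S'.
  split.
  - by split.
  - by move=> c d [Sc cm] [Sd dm]; split; [exact: SD | rewrite cm dm addr0].
  - by move=> r c [Sc cm]; split; [exact: SZ | rewrite cm mulr0].
have [l' [ks' [hks' hrep']]] := IH S' hS'.
exists (n0 + l')%N, (fun j => if (j < n0)%N then cs j else ks' (j - n0)%N); split.
  move=> j hj; case: ifP => hjn; first by case: (hcs j hjn).
  by case: (hks' (j - n0)%N); rewrite // ltn_subLR // leqNgt hjn.
move=> c Sc.
have [a ha] := (hg (c m)).1 (ex_intro _ c (conj Sc erefl)).
pose an := extf 0 a.
pose c' := fun k => c k - \sum_(i < n0) an i * cs i k.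
have Sc' : S' c'.
  split.
    rewrite (_ : c' = fun k => c k + \sum_(i < n0) (- an i) * cs i k).
      apply: SD => //; apply: (@vclosed_sum S hS n0 (fun i => - an i) cs) => i hi; by case: (hcs i hi).
    by apply: funext => k; rewrite /c' -sumrN; congr (_ + _); apply: eq_bigr => i _; rewrite mulNr.
  rewrite /c' ha; apply/eqP; rewrite subr_eq0; apply/eqP; apply: eq_bigr => i _.
  by case: (hcs i (ltn_ord i)) => _ ->; rewrite /an !extfE mulrC.
have [t' ht'] := hrep' c' Sc'.
exists (fun j => if (j < n0)%N then an j else t' (j - n0)%N) => k hk.
rewrite big_split_ord /=.
rewrite (eq_bigr (fun i : 'I_n0 => an i * cs i k)); last by move=> i _ /=; rewrite ltn_ord.
rewrite (eq_bigr (fun j : 'I_l' => t' j * ks' j k)); last first.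
  by move=> j _ /=; rewrite ltnNge leq_addr /= addKn.
move: hk; rewrite ltnS leq_eqVlt => /orP [/eqP ->|hk].
  rewrite [X in _ + X]big1 ?addr0; last by move=> j _; case: (hks' j (ltn_ord j)) => _ ->; rewrite mulr0.
  by case: Sc' => _ /eqP; rewrite subr_eq0 => /eqP.
by rewrite -ht' // /c' addrC subrK.
Qed.

End Noeth.
Lemma sum_pair (V : zmodType) (m m0 : nat) (F : nat -> V) :
  \sum_(k < (m * m0)%N) F k = \sum_(j < m) \sum_(i < m0) F (j * m0 + i)%N.
Proof.
elim: m => [|m IH]; first by rewrite !big_ord0.
rewrite big_ord_recr /= -IH.
have e : (m.+1 * m0 = m * m0 + m0)%N by rewrite mulSnr.
rewrite (_ : \sum_(k < m.+1 * m0) F k = \sum_(k < m * m0 + m0) F k); last first.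
  by rewrite e.
by rewrite big_split_ord.
Qed.
Section Frob.
Variables (R : comNzRingType) (p : nat) (hchar : p \in [pchar R]).

Lemma p_prime : prime p. Proof. exact: pcharf_prime hchar. Qed.

Lemma frobD n (x y : R) : (x + y) ^+ (p ^ n) = x ^+ (p ^ n) + y ^+ (p ^ n).
Proof.
apply: exprDn_pchar; by rewrite pnatX pnatE ?p_prime // hchar.
Qed.

Lemma frob0 n : (0 : R) ^+ (p ^ n) = 0.
Proof. by rewrite expr0n expn_eq0 eqn0Ngt (prime_gt0 p_prime). Qed.

Lemma frobB n (x y : R) : (x - y) ^+ (p ^ n) = x ^+ (p ^ n) - y ^+ (p ^ n).
Proof. by apply: (addIr (y ^+ (p ^ n))); rewrite -frobD !subrK. Qed.

Lemma frob_sum n m (F : 'I_m -> R) :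
  (\sum_(i < m) F i) ^+ (p ^ n) = \sum_(i < m) F i ^+ (p ^ n).
Proof.
elim: m F => [|m IH] F; first by rewrite !big_ord0 frob0.
by rewrite !big_ord_recr /= frobD IH.
Qed.

Lemma Ffin_nat : F_finite R p ->
  exists m (g : nat -> R), forall y, exists c : nat -> R,
    y = \sum_(i < m) g i * c i ^+ p.
Proof.
move=> [m [g hg]]; exists m, (extf 0 g) => y.
have [c hc] := hg y; exists (extf 0 c); rewrite hc.
by apply: eq_bigr => i _; rewrite !extfE.
Qed.

Lemma gens (hF : F_finite R p) n : exists m (g : nat -> R), forall x, exists c : nat -> R,
  x = \sum_(i < m) g i * c i ^+ (p ^ n).
Proof.
have [m0 [g0 hg0]] := Ffin_nat hF.
elim: n => [|n [m [g hg]]].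
  exists 1%N, (fun _ => 1) => x; exists (fun _ => x).
  by rewrite big_ord1 expn0 expr1 mul1r.
exists (m * m0)%N, (fun k => g (k %/ m0)%N * g0 (k %% m0)%N ^+ (p ^ n)) => x.
have [d hd] := hg x.
have [cc hcc] := @fchoice (nat -> R) (fun _ => 0)
  (fun j (c : nat -> R) => d j = \sum_(i < m0) g0 i * c i ^+ p) m (fun j _ => hg0 (d j)).
exists (fun k => cc (k %/ m0)%N (k %% m0)%N).
rewrite (@sum_pair R m m0 (fun k => g (k %/ m0)%N * g0 (k %% m0)%N ^+ (p ^ n) * cc (k %/ m0)%N (k %% m0)%N ^+ (p ^ n.+1))) hd; apply: eq_bigr => j _.
rewrite (hcc j (ltn_ord j)) frob_sum mulr_sumr; apply: eq_bigr => i _.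
have m0pos : (0 < m0)%N by case: (i) => [k]; case: (m0) => //.
rewrite divnMDl // modnMDl divn_small // modn_small // addn0.
by rewrite exprMn -exprM expnS mulnC mulrA.
Qed.
End Frob.
Section PartA.
Variables (R : comNzRingType) (p : nat) (E : lmodType R).

Lemma phi_comp_act_shift (r : R) (n k : nat) (t : phiE E) :
  phi_comp (n + k) (phi_act p r 0 (phi_act p 1 n t)) =
  [seq (r * u.1 ^+ (p ^ n), u.2) | u <- phi_comp k t].
Proof.
rewrite /phi_comp /phi_act !filter_map -!map_comp.
rewrite (@eq_filter _ _ (fun u => u.1 == k)); last first.
  by move=> u /=; change (((0 + (n + u.1))%N == (n + k)%N) = (u.1 == k)); rewrite add0n eqn_add2l.
by apply: eq_map => u /=; rewrite expn0 expr1 mul1r.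
Qed.

Lemma phi_comp_act0 (r : R) (k : nat) (t : phiE E) :
  phi_comp k (phi_act p r 0 t) = [seq (r * u.1, u.2) | u <- phi_comp k t].
Proof.
rewrite /phi_comp /phi_act !filter_map -!map_comp.
rewrite (@eq_filter _ _ (fun u => u.1 == k)); last first.
  by move=> u /=; change (((0 + u.1)%N == k) = (u.1 == k)); rewrite add0n.
by apply: eq_map => u /=; rewrite expn0 expr1.
Qed.

Lemma annR_phi (N : phiE E -> Prop) (hN : is_Rxf_submodule p N) (n : nat)
  (phi : R -> R) (phiD : forall x y, phi (x + y) = phi x + phi y)
  (phiL : forall u s, phi (u * s ^+ (p ^ n)) = s * phi u) (r : R) :
  annR p N r -> annR p N (phi r).
Proof.
move=> hr t Nt k.
case: hN => _ _ _ hact.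
have := hr _ (hact 1 n t Nt) (n + k)%N.
rewrite /tensor_zero phi_comp_act_shift phi_comp_act0 => H W psi [psiD1 psiD2 psiZ].
pose psi' := fun (u : R) (v : E) => psi (phi u) v.
have bal : balanced (p ^ (n + k)) psi'.
  split; rewrite /psi'.
  - by move=> r1 r2 v; rewrite phiD psiD1.
  - by move=> r1 v1 v2; rewrite psiD2.
  - move=> r1 s v; rewrite expnD mulnC exprM phiL mulrC; exact: psiZ.
have := H W psi' bal.
rewrite !big_map /psi' => H'; apply: (etrans _ H').
by apply: eq_bigr => u _; rewrite phiL mulrC.
Qed.
End PartA.
Section SubM.
Variables (R : comNzRingType) (M : lmodType R) (S : M -> Prop).
Definition closedS := [/\ S 0, (forall x y, S x -> S y -> S (x + y)) &
  (forall (r : R) x, S x -> S (r *: x))].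
Variable (hS : closedS).
Let S0 : S 0. Proof. by case: hS. Qed.
Let SD : forall x y, S x -> S y -> S (x + y). Proof. by case: hS. Qed.
Let SZ : forall (r : R) x, S x -> S (r *: x). Proof. by case: hS. Qed.

Definition Sb : pred M := fun x => `[< S x >].
Definition subm of closedS := {x : M | Sb x}.
Notation SM := (subm hS).
HB.instance Definition _ := [isSub of SM for (@sval M Sb)].
HB.instance Definition _ := [Choice of SM by <:].

Lemma Sb0 : Sb 0. Proof. exact/asboolP. Qed.
Lemma SbD {x y} : Sb x -> Sb y -> Sb (x + y).
Proof. by move=> /asboolP hx /asboolP hy; apply/asboolP; apply: SD. Qed.
Lemma SbZ r {x} : Sb x -> Sb (r *: x).
Proof. by move=> /asboolP hx; apply/asboolP; apply: SZ. Qed.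
Lemma SbN {x} : Sb x -> Sb (- x).
Proof. by move=> hx; rewrite -scaleN1r; apply: SbZ. Qed.

Definition sm0 : SM := exist _ 0 Sb0.
Definition smadd (x y : SM) : SM := exist _ (val x + val y) (SbD (valP x) (valP y)).
Definition smopp (x : SM) : SM := exist _ (- val x) (SbN (valP x)).
Definition smscale (r : R) (x : SM) : SM := exist _ (r *: val x) (SbZ r (valP x)).

Lemma smaddA : associative smadd.
Proof. by move=> x y z; apply: val_inj; rewrite /= addrA. Qed.
Lemma smaddC : commutative smadd.
Proof. by move=> x y; apply: val_inj; rewrite /= addrC. Qed.
Lemma smadd0 : left_id sm0 smadd.
Proof. by move=> x; apply: val_inj; rewrite /= add0r. Qed.
Lemma smaddN : left_inverse sm0 smopp smadd.
Proof. by move=> x; apply: val_inj; rewrite /= addNr. Qed.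
HB.instance Definition _ := GRing.isZmodule.Build SM smaddA smaddC smadd0 smaddN.
Lemma smscaleA a b v : smscale a (smscale b v) = smscale (a * b) v.
Proof. by apply: val_inj; rewrite /= scalerA. Qed.
Lemma smscale1 : left_id 1 smscale.
Proof. by move=> x; apply: val_inj; rewrite /= scale1r. Qed.
Lemma smscaleDr : right_distributive smscale +%R.
Proof. by move=> a x y; apply: val_inj; rewrite /= scalerDr. Qed.
Lemma smscaleDl v : {morph smscale^~ v: a b / a + b}.
Proof. by move=> a b; apply: val_inj; rewrite /= scalerDl. Qed.
HB.instance Definition _ := GRing.Zmodule_isLmodule.Build R SM smscaleA smscale1 smscaleDr smscaleDl.

Lemma subm_valD (x y : SM) : val (x + y) = val x + val y. Proof. by []. Qed.
Lemma subm_valZ r (x : SM) : val (r *: x) = r *: val x. Proof. by []. Qed.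
End SubM.

Section HomEval.
Variables (R : comNzRingType) (E : lmodType R) (hinj : injective_module E).

Lemma rlin0 (M N : lmodType R) (f : M -> N) : rlinear f -> f 0 = 0.
Proof.
move=> hf; have := hf 1 0 0; rewrite !scale1r !addr0 => e.
by apply: (addrI (f 0)); rewrite addr0 -e.
Qed.

Lemma rlin_sum (M N : lmodType R) (f : M -> N) (hf : rlinear f) l (a : 'I_l -> R)
  (x : 'I_l -> M) : f (\sum_(j < l) a j *: x j) = \sum_(j < l) a j *: f (x j).
Proof.
elim: l a x => [|l IH] a x; first by rewrite !big_ord0 rlin0.
by rewrite !big_ord_recr /= addrC hf IH addrC.
Qed.

Variables (m l : nat) (ks : nat -> nat -> R).

Definition rho (lam : nat -> R) : 'rV[R]_l := \row_(j < l) \sum_(i < m) lam i * ks j i.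

Lemma homeval (v : nat -> E) :
  (forall lam : nat -> R, (forall j, (j < l)%N -> \sum_(i < m) lam i * ks j i = 0) ->
     \sum_(i < m) lam i *: v i = 0) ->
  exists w : nat -> E, forall i, (i < m)%N -> v i = \sum_(j < l) ks j i *: w j.
Proof.
move=> hv.
pose S (x : 'rV[R]_l) := exists lam, x = rho lam.
have hS : closedS S.
  split.
  - exists (fun _ => 0); apply/rowP => j; rewrite !mxE big1 // => i _; by rewrite mul0r.
  - move=> _ _ [a ->] [b ->]; exists (fun i => a i + b i); apply/rowP => j.
    by rewrite !mxE -big_split; apply: eq_bigr => i _; rewrite mulrDl.
  - move=> r _ [a ->]; exists (fun i => r * a i); apply/rowP => j.
    by rewrite !mxE mulr_sumr; apply: eq_bigr => i _; rewrite mulrA.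
pose F (lam : nat -> R) := \sum_(i < m) lam i *: v i.
have wd : forall a b, rho a = rho b -> F a = F b.
  move=> a b hab; apply/eqP; rewrite -subr_eq0; apply/eqP.
  rewrite /F -sumrB (eq_bigr (fun i : 'I_m => (a i - b i) *: v i)); last first.
    by move=> i _; rewrite scalerBl.
  apply: (hv (fun i => a i - b i)) => j hj.
  have := congr1 (fun x : 'rV[R]_l => x 0 (Ordinal hj)) hab; rewrite /= !mxE => e.
  rewrite (eq_bigr (fun i : 'I_m => a i * ks j i - b i * ks j i)); last first.
    by move=> i _; rewrite mulrBl.
  by rewrite sumrB e subrr.
pose N := subm hS.
have lamof : forall x : N, {lam | val x = rho lam}.
  by move=> x; apply: cid; exact/asboolP/(valP x).
pose g (x : N) := F (sval (lamof x)).
have gE : forall (x : N) lam, val x = rho lam -> g x = F lam.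
  by move=> x lam e; rewrite /g; apply: wd; rewrite -(svalP (lamof x)).
have glin : rlinear g.
  move=> r x y.
  have [lx hx] := lamof x; have [ly hy] := lamof y.
  rewrite (gE x lx hx) (gE y ly hy) (gE _ (fun i => r * lx i + ly i)); last first.
    rewrite subm_valD subm_valZ hx hy.
    apply/rowP => j; rewrite !mxE mulr_sumr -big_split; apply: eq_bigr => i _.
    by rewrite mulrDl mulrA.
  rewrite /F scaler_sumr -big_split; apply: eq_bigr => i _.
  by rewrite scalerDl scalerA.
have ilin : rlinear (fun x : N => val x) by [].
have [h [hlin hh]] := hinj ilin val_inj glin.
exists (fun j => h (\row_(k < l) ((k : nat) == j)%:R)) => i hi.
have Sd : S (rho (fun k => (k == i)%:R)) by exists (fun k => (k == i)%:R).
have Sdb : Sb S (rho (fun k => (k == i)%:R)) by exact/asboolP.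
pose x : N := @exist _ (Sb S) _ Sdb.
have := hh x; rewrite (gE x (fun k => (k == i)%:R)) //.
rewrite /F (bigD1 (Ordinal hi)) //= eqxx scale1r big1 ?addr0; last first.
  move=> k /eqP hk; rewrite (_ : (k : nat) == i = false) ?scale0r //.
  by apply/negbTE/eqP => e; apply: hk; apply: val_inj.
move=> <-.
rewrite (_ : rho (fun k => (k == i)%:R) = \sum_(j < l) ks j i *: \row_(k < l) ((k : nat) == j)%:R).
  by rewrite (rlin_sum hlin).
apply/rowP => j; rewrite /= !mxE summxE.
rewrite (bigD1 (Ordinal hi)) //= eqxx mul1r big1 ?addr0; last first.
  move=> k /eqP hk; rewrite (_ : (k : nat) == i = false) ?mul0r //.
  by apply/negbTE/eqP => e; apply: hk; apply: val_inj.
rewrite (bigD1 j) //= !mxE eqxx mulr1 big1 ?addr0 // => k /eqP hk.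
rewrite !mxE (_ : (j : nat) == k = false) ?mulr0 //.
by apply/negbTE/eqP => e; apply: hk; apply: val_inj.
Qed.
End HomEval.

Section Final.
Variables (R : comNzRingType) (E : lmodType R).

Lemma psi_sum1 (W : zmodType) (psi : R -> E -> W) q (hb : balanced q psi) l
  (F : 'I_l -> R) v : psi (\sum_(j < l) F j) v = \sum_(j < l) psi (F j) v.
Proof.
case: hb => D1 _ _.
have p0 : psi 0 v = 0.
  by apply: (addrI (psi 0 v)); rewrite -D1 !addr0.
elim: l F => [|l IH] F; first by rewrite !big_ord0.
by rewrite !big_ord_recr /= D1 IH.
Qed.

Lemma psi_sum2 (W : zmodType) (psi : R -> E -> W) q (hb : balanced q psi) l
  r (F : 'I_l -> E) : psi r (\sum_(j < l) F j) = \sum_(j < l) psi r (F j).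
Proof.
case: hb => _ D2 _.
have p0 : psi r 0 = 0.
  by apply: (addrI (psi r 0)); rewrite -D2 !addr0.
elim: l F => [|l IH] F; first by rewrite !big_ord0.
by rewrite !big_ord_recr /= D2 IH.
Qed.
End Final.

Theorem theorem3p4 (R : comNzRingType) (p : nat) (m : R -> Prop) (E : lmodType R)
  (hp : prime p) (hchar : p \in [pchar R])
  (hnoeth : noetherian R) (hlocal : is_local_with m)
  (hE : injective_hull_residue m E)
  (hFfin : F_finite R p) (hFpure : F_pure R p) :
  forall a : R -> Prop, PhiE_special p E a -> fully_PhiE_special p E a.
Proof.
move=> a [N [hN ha]] e he r n ar k.
rewrite /phi_comp /phi_act /=.
case: eqP => [hk|_]; last by move=> W psi _; rewrite big_nil.
have -> : k = n by rewrite -hk; exact: addn0.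
move=> W psi hb.
rewrite big_cons big_nil addr0 /= expr1n mulr1.
have [mm [g hg]] := gens hchar hFfin n.
pose K (c : nat -> R) := \sum_(i < mm) g i * c i ^+ (p ^ n) = 0.
have hK : vclosed K.
  split.
  - by rewrite /K big1 // => i _; rewrite frob0 // mulr0.
  - move=> c d; rewrite /K => hc hd.
    rewrite (eq_bigr (fun i : 'I_mm => g i * c i ^+ (p ^ n) + g i * d i ^+ (p ^ n))).
      by rewrite big_split /= hc hd addr0.
    by move=> i _; rewrite frobD // mulrDr.
  - move=> s c; rewrite /K => hc.
    rewrite (eq_bigr (fun i : 'I_mm => s ^+ (p ^ n) * (g i * c i ^+ (p ^ n)))).
      by rewrite -mulr_sumr hc mulr0.
    by move=> i _; rewrite exprMn mulrCA.
have [l [ks [hks hrep]]] := noeth_vec hnoeth mm hK.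
pose dsel (x : R) := sval (cid (hg x)).
have hdsel : forall x, x = \sum_(i < mm) g i * dsel x i ^+ (p ^ n).
  by move=> x; rewrite /dsel; case: (cid (hg x)).
pose d := dsel r.
have hv : forall lam : nat -> R,
    (forall j, (j < l)%N -> \sum_(i < mm) lam i * ks j i = 0) ->
    \sum_(i < mm) lam i *: (d i *: e) = 0.
  move=> lam hlam.
  pose phl (x : R) := \sum_(i < mm) lam i * dsel x i.
  have rep : forall x (c : nat -> R), x = \sum_(i < mm) g i * c i ^+ (p ^ n) ->
      phl x = \sum_(i < mm) lam i * c i.
    move=> x c hc.
    have Kc : K (fun i => c i - dsel x i).
      rewrite /K (eq_bigr (fun i : 'I_mm => g i * c i ^+ (p ^ n) - g i * dsel x i ^+ (p ^ n))).
        by rewrite sumrB -hc -hdsel subrr.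
      by move=> i _; rewrite frobB // mulrBr.
    have [t ht] := hrep _ Kc.
    apply/eqP; rewrite eq_sym -subr_eq0 /phl -sumrB.
    rewrite (eq_bigr (fun i : 'I_mm => \sum_(j < l) t j * (lam i * ks j i))); last first.
      move=> i _; rewrite -mulrBr ht // mulr_sumr; apply: eq_bigr => j _.
      by rewrite mulrCA.
    rewrite exchange_big /= big1 // => j _.
    by rewrite -mulr_sumr hlam // mulr0.
  have phD : forall x y, phl (x + y) = phl x + phl y.
    move=> x y; rewrite (rep _ (fun i => dsel x i + dsel y i)).
      by rewrite /phl -big_split; apply: eq_bigr => i _; rewrite mulrDr.
    rewrite {1}(hdsel x) {1}(hdsel y) -big_split; apply: eq_bigr => i _.
    by rewrite frobD // mulrDr.
  have phL : forall u s, phl (u * s ^+ (p ^ n)) = s * phl u.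
    move=> u s; rewrite (rep _ (fun i => dsel u i * s)).
      by rewrite /phl mulr_sumr; apply: eq_bigr => i _; rewrite mulrA mulrC mulrA.
    rewrite {1}(hdsel u) mulr_suml; apply: eq_bigr => i _.
    by rewrite exprMn mulrA.
  have aph : a (phl r) by apply/ha; apply: (annR_phi hN phD phL); apply/ha.
  have := he _ aph; rewrite /phl scaler_suml => H0; apply: (etrans _ H0).
  by apply: eq_bigr => i _; rewrite scalerA.
have [w hw] := @homeval R E hE.1 mm l ks (fun i => d i *: e) hv.
rewrite {1}(hdsel r) (psi_sum1 hb).
case: (hb) => _ _ psiZ.
rewrite (eq_bigr (fun i : 'I_mm => \sum_(j < l) psi (g i * ks j i ^+ (p ^ n)) (w j))); last first.
  by move=> i _; rewrite psiZ -/d (hw i (ltn_ord i)) (psi_sum2 hb); apply: eq_bigr => j _; rewrite psiZ.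
rewrite exchange_big /= big1 // => j _.
by rewrite -(psi_sum1 hb) (hks j (ltn_ord j)); case: hb => D1 _ _; apply: (addrI (psi 0 (w j))); rewrite -D1 !addr0.
Qed.
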